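(* Let $A,B$ be finite nonempty subsets of an abelian group $\mathbf G$ and $k\ge1$ an integer. Then $$R^{(k)}_B[A]\ge\frac{|B|^{2k}}{\lambda_1^2(A,B,k)}\quad\text{and}\quad R^{(k)}_B[A]\ge\frac{|B|^{2k}}{\mathsf E_{2k+1}(A,B)^{1/2}}.$$ Moreover, if $A_1\subseteq A$ and $B^{(y)}\subseteq B^k$ ($y\in A_1$) is an arbitrary family of sets, then for each choice of sign $$\Big|\bigcup_{y\in A_1}\big(B^{(y)}\pm\Delta(y)\big)\Big|\ge\frac{\big(\sum_{y\in A_1}|B^{(y)}|\big)^2}{\mathsf E_{k+1}(A,B)}.$$
   Context: $R^{(k)}_B[A]=\min_{\emptyset\ne Z\subseteq A}|B^k+\Delta(Z)|/|Z|$, where $\Delta(Z)=\{(z,\dots,z)\in\mathbf G^k:z\in Z\}$ and $\Delta(y)=\Delta(\{y\})$; sums in $\mathbf G^k$ are coordinatewise. $(X\circ X)(x)=|\{(a,b)\in X^2:b-a=x\}|$ and $\mathsf E_j(A,B)=\sum_x(A\circ A)(x)(B\circ B)(x)^{j-1}$. $\lambda_1(A,B,k)$ is the largest singular value of the real matrix $\mathbf M$ with rows indexed by $x=(x_1,\dots,x_k)\in B^k-\Delta(A)$ and columns by $y\in A$, with entries $\mathbf M(x,y)=A(y)B(y+x_1)\cdots B(y+x_k)$ (indicator functions), i.e. $\lambda_1=\max_{w\ne0}\|\mathbf Mw\|_2/\|w\|_2$; equivalently $\lambda_1^2=\max\{\sum_s(w\circ w)(s)(B\circ B)(s)^k:\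 \|w\|_2=1,\ \mathrm{supp}\,w\subseteq A\}$ with $(w\circ w)(s)=\sum_y w(y)w(y+s)$. *)

(* Defs.v *)
From HB Require Import structures.
From mathcomp Require Import all_boot all_order all_algebra.
From mathcomp Require Import finmap.
From mathcomp Require Import reals.
Unset Printing Implicit Defensive.
Import Order.TTheory GRing.Theory Num.Theory.
Local Open Scope fset_scope.
Local Open Scope ring_scope.

Section Defs.
Variable G : zmodType.

Definition diag (k : nat) (z : G) : 'rV[G]_k := const_mx z.

Definition row_of (k : nat) (B : {fset G}) (f : {ffun 'I_k -> B}) : 'rV[G]_k :=
  \row_i val (f i).

Definition cube (k : nat) (B : {fset G}) : {fset 'rV[G]_k} :=
  [fset row_of k B f | f in {: {ffun 'I_k -> B}}].

Definition diagset (k : nat) (Z : {fset G}) : {fset 'rV[G]_k} :=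
  [fset diag k z | z in Z].

Definition sumset (k : nat) (X Y : {fset 'rV[G]_k}) : {fset 'rV[G]_k} :=
  [fset (x + y)%R | x in X, y in Y].

Definition diffcube (k : nat) (B A : {fset G}) : {fset 'rV[G]_k} :=
  [fset (x - diag k a)%R | x in cube k B, a in A].

Definition repr_diff (X : {fset G}) (x : G) : nat :=
  #|[set p : X * X | val p.2 - val p.1 == x]|.

Definition diffset (X : {fset G}) : {fset G} := [fset (b - a)%R | a in X, b in X].

(* E_j(A,B) = sum_x (A o A)(x) (B o B)(x)^(j-1); the summand vanishes
   outside A - A, so the sum is taken over A - A. *)
Definition energy (j : nat) (A B : {fset G}) : nat :=
  (\sum_(x <- diffset A) repr_diff A x * repr_diff B x ^ (j - 1))%N.

Variable R : realType.

(* R^{(k)}_B[A] = min over nonempty Z subseteq A of |B^k + Delta(Z)| / |Z|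
   (A itself is among the Z, so it is used as the neutral element). *)
Definition ratioZ (k : nat) (B Z : {fset G}) : R :=
  (#|` sumset k (cube k B) (diagset k Z)|)%:R / (#|` Z|)%:R.

Definition Rk (k : nat) (B A : {fset G}) : R :=
  \big[Num.min / ratioZ k B A]_(Z <- fpowerset A | Z != fset0) ratioZ k B Z.

Definition Mentry (k : nat) (A B : {fset G}) (x : 'rV[G]_k) (y : G) : R :=
  ((y \in A) && [forall i : 'I_k, y + x 0 i \in B])%:R.

Definition Mw (k : nat) (A B : {fset G}) (w : {ffun A -> R}) (x : 'rV[G]_k) : R :=
  \sum_(y : A) Mentry k A B x (val y) * w y.

Definition lambda1 (A B : {fset G}) (k : nat) : R :=
  sup (fun t : R => exists w : {ffun A -> R}, w != 0 /\
        t = Num.sqrt (\sum_(x <- diffcube k B A) (Mw k A B w x) ^+ 2)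
            / Num.sqrt (\sum_(y : A) (w y) ^+ 2)).

End Defs.

(* Main.v *)
Require Import Defs.
From HB Require Import structures.
From mathcomp Require Import all_boot all_order all_algebra.
From mathcomp Require Import finmap.
From mathcomp Require Import reals.
From mathcomp Require Import ring lra.
Import Order.TTheory GRing.Theory Num.Theory.
Local Open Scope fset_scope.
Local Open Scope ring_scope.

Lemma mem_cube (G : zmodType) (k : nat) (B : {fset G}) (v : 'rV[G]_k) :
  (v \in cube G k B) = [forall i, v 0 i \in B].
Proof.
apply/imfsetP/forallP => /=.
  by case=> f _ -> i; rewrite /row_of mxE; exact: fsvalP.
move=> H; exists [ffun i => [` H i]] => //.
by apply/rowP => j; rewrite /row_of !mxE ffunE /=.
Qed.

Lemma card_cube (G : zmodType) (k : nat) (B : {fset G}) :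
  #|` cube G k B| = (#|` B| ^ k)%N.
Proof.
rewrite /cube card_imfset; last first.
  move=> f g e; apply/ffunP => i; apply: val_inj.
  by have := congr1 (fun M : 'rV[G]_k => M 0 i) e; rewrite /row_of !mxE.
have -> : size (enum_finmem (mem {: {ffun 'I_k -> B}})) = #|{ffun 'I_k -> B}|.
  rewrite cardE; apply: perm_size; apply: uniq_perm.
  - exact: enum_finmem_uniq.
  - exact: enum_uniq.
  move=> x; rewrite enum_finmemE. by rewrite !inE.
by rewrite card_ffun card_ord cardfE.
Qed.

Lemma card_transl (V : zmodType) (X : {fset V}) (c : V) :
  #|` [fset x + c | x in X]| = #|` X|.
Proof.
rewrite card_imfset; last exact: addIr.
apply: perm_size; apply: uniq_perm; first exact: enum_finmem_uniq.
  exact: fset_uniq.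
by move=> x; rewrite enum_finmemE.
Qed.

Lemma Q_le (G : zmodType) (B : {fset G}) (d : G) :
  (#|[set a : B | (val a + d)%R \in B]| <= repr_diff G B d)%N.
Proof.
rewrite /repr_diff.
set S := [set p : B * B | _].
rewrite -(card_in_imset (f := fun p : B * B => p.1) (D := mem S)); last first.
  move=> [p1 p2] [q1 q2]; rewrite !inE /= => /eqP h1 /eqP h2 e; subst q1.
  congr pair; apply: val_inj; apply/eqP.
  by rewrite -(subrK (val p1) (val p2)) h1 -h2 subrK.
apply: subset_leq_card; apply/subsetP => a; rewrite inE => h.
apply/imsetP; exists (a, [` h]) => //.
by rewrite inE /= addrC addKr.
Qed.

Lemma NB (G : zmodType) (k : nat) (B : {fset G}) (d : G) :
  (#|` [fset x in cube G k B | (x + diag G k d)%R \in cube G k B]| <= repr_diff G B d ^ k)%N.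
Proof.
set Q := [set a : B | val a + d \in B].
apply: (@leq_trans #|` [fset row_of G k B f | f in ffun_on (mem Q)]|).
  apply: fsubset_leq_card; apply/fsubsetP => x; rewrite !inE => /andP [].
  case/imfsetP => f _ -> /= h; apply/imfsetP; exists f => //=.
  apply/ffun_onP => i; rewrite inE.
  move: h; rewrite mem_cube => /forallP /(_ i).
  by rewrite /row_of /diag !mxE.
apply: (leq_trans (leq_imfset_card _ _ _)).
have -> : size (enum_finmem (mem (ffun_on_mem 'I_k (mem (mem Q))))) = #|ffun_on_mem 'I_k (mem (mem Q))|.
  rewrite cardE; apply: perm_size; apply: uniq_perm.
  - exact: enum_finmem_uniq.
  - exact: enum_uniq.
  by move=> x; rewrite enum_finmemE !inE.
rewrite card_ffun_on card_ord; have h := Q_le G B d; clear -h; elim: k => [|n IH] //; by rewrite !expnS leq_mul.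
Qed.

Lemma diagB (G : zmodType) (k : nat) (a b : G) : diag G k (a - b) = diag G k a - diag G k b.
Proof. by apply/rowP => i; rewrite !mxE. Qed.
Lemma diagN (G : zmodType) (k : nat) (a : G) : diag G k (- a) = - diag G k a.
Proof. by apply/rowP => i; rewrite !mxE. Qed.
Lemma diagD (G : zmodType) (k : nat) (a b : G) : diag G k (a + b) = diag G k a + diag G k b.
Proof. by apply/rowP => i; rewrite !mxE. Qed.

Lemma mem_transl (V : zmodType) (X : {fset V}) (c x : V) :
  (x \in [fset b + c | b in X]) = (x - c \in X).
Proof.
apply/imfsetP/idP => /=.
  by case=> b Xb ->; rewrite addrK.
by move=> h; exists (x - c) => //; rewrite subrK.
Qed.

Lemma inter_le (G : zmodType) (k : nat) (B : {fset G}) (X1 X2 : {fset 'rV[G]_k})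
  (c1 c2 : G) : X1 `<=` cube G k B -> X2 `<=` cube G k B ->
  (#|` [fset (b + diag G k c1)%R | b in X1] `&` [fset (b + diag G k c2)%R | b in X2]|
     <= repr_diff G B (c2 - c1)%R ^ k)%N.
Proof.
move=> /fsubsetP h1 /fsubsetP h2.
set I := _ `&` _.
rewrite -(card_transl _ I (- diag G k c2)).
apply: leq_trans (NB G k B (c2 - c1)).
apply: fsubset_leq_card; apply/fsubsetP => x.
rewrite mem_transl opprK in_fsetI !mem_transl => /andP [m1 m2].
rewrite !inE; apply/andP; split.
  by move: m2; rewrite addrK => /h2.
rewrite diagB addrA.
exact: h1.
Qed.

Lemma inter_le2 (G : zmodType) (k : nat) (B : {fset G}) (z z' : G) :
  (#|` [fset (b + diag G k z)%R | b in cube G k B] `&` [fset (b + diag G k z')%R | b in cube G k B]|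
     <= #|` [fset (b + diag G k (- z))%R | b in cube G k B] `&`
            [fset (b + diag G k (- z'))%R | b in cube G k B]|)%N.
Proof.
set I := _ `&` _.
rewrite -(card_transl _ I (- (diag G k z + diag G k z'))).
apply: fsubset_leq_card; apply/fsubsetP => x.
rewrite mem_transl opprK in_fsetI !mem_transl => /andP [m1 m2].
rewrite in_fsetI !mem_transl !diagN !opprK; apply/andP; split.
  by move: m2; rewrite addrA addrK.
by move: m1; rewrite (addrC (diag G k z)) addrA addrK.
Qed.

Lemma PD (R : realType) (G : zmodType) (A : {fset G}) (f : G -> R) :
  \sum_(a <- A) \sum_(b <- A) f (b - a) =
  \sum_(d <- diffset G A) (repr_diff G A d)%:R * f d.
Proof.
rewrite big_seq_fsetE /=.
rewrite (eq_bigr (fun a : A => \sum_(b : A) f (val b - val a))); last first.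
  by move=> a _; rewrite big_seq_fsetE.
rewrite pair_big /=.
transitivity (\sum_(p : A * A) \sum_(d <- diffset G A | d == val p.2 - val p.1) f d).
  apply: eq_bigr => p _.
  rewrite -big_filter.
  have -> : [seq d <- diffset G A | d == val p.2 - val p.1] = [:: val p.2 - val p.1].
    apply: filter_pred1_uniq; first exact: fset_uniq.
    by rewrite /diffset; apply: (in_imfset2 _ (fun a b => b - a)) => /=; apply: fsvalP.
  by rewrite big_seq1.
rewrite (eq_bigr (fun p : A * A => \sum_(d <- diffset G A)
    (if d == val p.2 - val p.1 then f d else 0))); last by move=> p _; rewrite big_mkcond.
rewrite exchange_big /=; apply: eq_bigr => d _.
rewrite -big_mkcond /= /repr_diff.
rewrite (eq_bigl (fun p => p \in [set p : A * A | val p.2 - val p.1 == d])); last first.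
  by move=> p; rewrite inE eq_sym.
by rewrite sumr_const mulr_natl.
Qed.
Lemma sum_const_seq (R : realType) (I : Type) (s : seq I) (c : R) :
  \sum_(i <- s) c = (size s)%:R * c.
Proof.
rewrite -sum1_size natr_sum big_distrl /=.
by apply: eq_bigr => i _; rewrite mul1r.
Qed.

Lemma CS_seq (R : realType) (I : Type) (s : seq I) (f : I -> R) :
  (\sum_(i <- s) f i) ^+ 2 <= (size s)%:R * \sum_(i <- s) f i ^+ 2.
Proof.
have H : 0 <= \sum_(i <- s) \sum_(j <- s) (f i - f j) ^+ 2.
  by apply: sumr_ge0 => i _; apply: sumr_ge0 => j _; exact: sqr_ge0.
have E : \sum_(i <- s) \sum_(j <- s) (f i - f j) ^+ 2 =
   ((size s)%:R * \sum_(i <- s) f i ^+ 2) *+ 2 - (\sum_(i <- s) f i) ^+ 2 *+ 2.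
  transitivity (\sum_(i <- s) ((size s)%:R * f i ^+ 2 + \sum_(j <- s) f j ^+ 2
        - (f i * \sum_(j <- s) f j) *+ 2)).
    apply: eq_bigr => i _.
    have -> : \sum_(j <- s) (f i - f j) ^+ 2 =
      \sum_(j <- s) (f i ^+ 2 + f j ^+ 2 - (f i * f j) *+ 2).
      by apply: eq_bigr => j _; rewrite sqrrB; ring.
    by rewrite !big_split /= sumrN sum_const_seq sumrMnl -mulr_sumr.
  rewrite !big_split /= sumrN -mulr_sumr sum_const_seq sumrMnl -mulr_suml expr2.
  ring.
rewrite E subr_ge0 in H.
move: H; rewrite !mulr2n; lra.
Qed.

Lemma cardR (R : realType) (T : choiceType) (X U : {fset T}) : X `<=` U ->
  (#|` X|)%:R = \sum_(u <- U) ((u \in X)%:R : R).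
Proof.
move=> XU; rewrite -(big_fset_incl _ XU); last by move=> x _ /negbTE ->.
rewrite card_fset_sum1 natr_sum; apply: eq_big_seq => x ->; done.
Qed.

Lemma GLa (R : realType) (T : choiceType) (I : eqType) (s : seq I)
  (F : I -> {fset T}) (U : {fset T}) : (forall i, i \in s -> F i `<=` U) ->
  \sum_(i <- s) ((#|` F i|)%:R : R) =
  \sum_(u <- U) \sum_(i <- s) ((u \in F i)%:R : R).
Proof.
move=> FU; rewrite (exchange_big) /=; apply: eq_big_seq => i si.
exact: cardR (FU i si).
Qed.

Lemma GLb (R : realType) (T : choiceType) (I : eqType) (s : seq I)
  (F : I -> {fset T}) (U : {fset T}) : (forall i, i \in s -> F i `<=` U) ->
  \sum_(i <- s) \sum_(j <- s) ((#|` F i `&` F j|)%:R : R) =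
  \sum_(u <- U) (\sum_(i <- s) ((u \in F i)%:R : R)) ^+ 2.
Proof.
move=> FU.
transitivity (\sum_(i <- s) \sum_(j <- s) \sum_(u <- U)
    ((u \in F i)%:R * (u \in F j)%:R : R)).
  apply: eq_big_seq => i si; apply: eq_bigr => j _.
  rewrite (@cardR R _ _ U); last exact: fsubset_trans (fsubsetIl _ _) (FU i si).
  by apply: congr_big => // u _; rewrite in_fsetI; case: (u \in F i); case: (u \in F j);
    rewrite ?mul1r ?mul0r.
rewrite (eq_bigr (fun i => \sum_(u <- U) \sum_(j <- s)
    ((u \in F i)%:R * (u \in F j)%:R : R))); last first.
  by move=> i _; rewrite exchange_big.
rewrite exchange_big /=; apply: eq_bigr => u _.
rewrite expr2 big_distrl /=; apply: eq_bigr => i _.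
by rewrite big_distrr.
Qed.

Lemma KEY (R : realType) (T : choiceType) (I : eqType) (s : seq I)
  (F : I -> {fset T}) (U : {fset T}) : (forall i, i \in s -> F i `<=` U) ->
  (\sum_(i <- s) ((#|` F i|)%:R : R)) ^+ 2 <=
  (#|` U|)%:R * \sum_(i <- s) \sum_(j <- s) ((#|` F i `&` F j|)%:R : R).
Proof.
move=> FU; rewrite (GLa R _ _ s _ _ FU) (GLb R _ _ s _ _ FU); exact: CS_seq.
Qed.

Lemma sub_sum_le (R : realType) (T : choiceType) (A1 A : {fset T}) (g : T -> R) :
  A1 `<=` A -> (forall x, 0 <= g x) ->
  \sum_(x <- A1) g x <= \sum_(x <- A) g x.
Proof.
move=> sA g0.
rewrite (eq_big_seq (fun x => if x \in A1 then g x else 0)); last by move=> x ->.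
rewrite (big_fset_incl _ sA); last by move=> x _ /negbTE ->.
by apply: ler_sum => x _; case: ifP.
Qed.

Lemma energyR (R : realType) (G : zmodType) (j : nat) (A B : {fset G}) :
  ((energy G j A B)%:R : R) =
  \sum_(d <- diffset G A) (repr_diff G A d)%:R * (repr_diff G B d)%:R ^+ (j - 1).
Proof. by rewrite /energy natr_sum; apply: eq_bigr => d _; rewrite natrM natrX. Qed.

Lemma seq_ler_sum (R : realType) (I : eqType) (s : seq I) (f g : I -> R) :
  (forall i, i \in s -> f i <= g i) -> \sum_(i <- s) f i <= \sum_(i <- s) g i.
Proof. by move=> h; rewrite big_seq [X in _ <= X]big_seq; apply: ler_sum. Qed.

Lemma pairs_energy (R : realType) (G : zmodType) (A B : {fset G}) (j : nat) (s : bool) :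
  \sum_(a <- A) \sum_(b <- A)
     ((repr_diff G B ((if s then b else - b) - (if s then a else - a)) ^ j)%N%:R : R)
  = (energy G j.+1 A B)%:R.
Proof.
rewrite energyR subn1 /=.
have -> : \sum_(a <- A) \sum_(b <- A)
     ((repr_diff G B ((if s then b else - b) - (if s then a else - a)) ^ j)%N%:R : R)
  = \sum_(a <- A) \sum_(b <- A) ((repr_diff G B (b - a) ^ j)%N%:R : R).
  case: s => //; rewrite exchange_big /=; apply: eq_bigr => a _; apply: eq_bigr => b _.
  by rewrite opprK addrC.
rewrite (PD R G A (fun d => ((repr_diff G B d ^ j)%N%:R : R))).
by apply: eq_bigr => d _; rewrite natrX.
Qed.

Lemma part3 (R : realType) (G : zmodType) (A B : {fset G}) (k : nat)
  (A1 : {fset G}) (Bf : G -> {fset 'rV[G]_k}) (s : bool) :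
        A1 `<=` A ->
        (forall y, y \in A1 -> Bf y `<=` cube G k B) ->
        (#|` \bigcup_(y <- A1) [fset (b + diag G k (if s then y else - y))%R | b in Bf y]|)%:R
          >= ((\sum_(y <- A1) #|` Bf y|)%N%:R) ^+ 2 / (energy G k.+1 A B)%:R :> R.
Proof.
move=> sA hB.
set F := fun y => [fset (b + diag G k (if s then y else - y))%R | b in Bf y].
set U := \bigcup_(y <- A1) _.
have K := @KEY R _ _ A1 F U (fun y hy => bigfcup_sup F hy isT).
have e1 : \sum_(y <- A1) ((#|` F y|)%:R : R) = (\sum_(y <- A1) #|` Bf y|)%N%:R.
  by rewrite natr_sum; apply: eq_bigr => y _; rewrite /F card_transl.
rewrite e1 in K.
have W : \sum_(i <- A1) \sum_(j <- A1) ((#|` F i `&` F j|)%:R : R) <= (energy G k.+1 A B)%:R.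
  rewrite -(pairs_energy R G A B k s).
  have st1 : \sum_(i <- A1) \sum_(j <- A1) ((#|` F i `&` F j|)%:R : R) <= \sum_(i <- A1) \sum_(j <- A1)
     ((repr_diff G B ((if s then j else - j) - (if s then i else - i)) ^ k)%N%:R : R).
    apply: seq_ler_sum => i hi; apply: seq_ler_sum => j hj.
    by rewrite ler_nat; apply: inter_le; apply: hB.
  apply: le_trans st1 _.
  have st2 := @sub_sum_le R _ A1 A (fun i => \sum_(j <- A)
     ((repr_diff G B ((if s then j else - j) - (if s then i else - i)) ^ k)%N%:R : R)) sA.
  apply: le_trans (st2 _); last by move=> x; apply: sumr_ge0 => ? _; exact: ler0n.
  apply: seq_ler_sum => i _; apply: sub_sum_le => // x; exact: ler0n.
set E := (energy G k.+1 A B)%:R.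
have E0 : 0 <= E := ler0n _ _.
have [E0'|Ep] := eqVneq E 0; first by rewrite E0' invr0 mulr0.
have {}Ep : 0 < E by rewrite lt0r Ep.
rewrite ler_pdivrMr //; apply: le_trans K _.
by apply: ler_wpM2l => //; exact: ler0n.
Qed.

Lemma coreZ (R : realType) (G : zmodType) (B Z : {fset G}) (k : nat) :
  (((#|` Z| * #|` B| ^ k)%N%:R : R)) ^+ 2 <=
  (#|` sumset G k (cube G k B) (diagset G k Z)|)%:R *
  \sum_(z <- Z) \sum_(z' <- Z)
    ((#|` [fset (b + diag G k z)%R | b in cube G k B] `&`
          [fset (b + diag G k z')%R | b in cube G k B]|)%:R : R).
Proof.
set F := fun z => [fset (b + diag G k z)%R | b in cube G k B].
have FU : forall z, z \in Z -> F z `<=` sumset G k (cube G k B) (diagset G k Z).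
  move=> z hz; apply/fsubsetP => x /imfsetP [b hb ->].
  rewrite /sumset; apply: (in_imfset2 _ (fun x y => x + y)) => //=.
  exact: (in_imfset _ (diag G k)).
have K := @KEY R _ _ Z F _ FU.
have e1 : \sum_(z <- Z) ((#|` F z|)%:R : R) = ((#|` Z| * #|` B| ^ k)%N%:R : R).
  rewrite (eq_bigr (fun _ => ((#|` B| ^ k)%N%:R : R))); last first.
    by move=> z _; rewrite /F card_transl card_cube.
  by rewrite sum_const_seq natrM.
by rewrite e1 in K.
Qed.

Lemma W2 (R : realType) (G : zmodType) (A B Z : {fset G}) (k : nat) : Z `<=` A ->
  \sum_(z <- Z) \sum_(z' <- Z)
    ((#|` [fset (b + diag G k z)%R | b in cube G k B] `&`
          [fset (b + diag G k z')%R | b in cube G k B]|)%:R : R)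
  <= (#|` Z|)%:R * Num.sqrt ((energy G (2 * k + 1) A B)%:R).
Proof.
move=> sZ.
set V := \sum_(z <- Z) \sum_(z' <- Z) ((repr_diff G B (z' - z) ^ k)%N%:R : R).
have h1 : \sum_(z <- Z) \sum_(z' <- Z)
    ((#|` [fset (b + diag G k z)%R | b in cube G k B] `&`
          [fset (b + diag G k z')%R | b in cube G k B]|)%:R : R) <= V.
  apply: seq_ler_sum => i _; apply: seq_ler_sum => j _.
  by rewrite ler_nat; apply: inter_le; apply: fsubset_refl.
apply: le_trans h1 _.
have V0 : 0 <= V by apply: sumr_ge0 => ? _; apply: sumr_ge0 => ? _; exact: ler0n.
have h2 : V ^+ 2 <= (#|` Z|)%:R ^+ 2 * (energy G (2 * k + 1) A B)%:R.
  have := @CS_seq R _ [seq (i1, i2) | i1 <- (Z : seq G), i2 <- (Z : seq G)]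
      (fun p => ((repr_diff G B (p.2 - p.1) ^ k)%N%:R : R)).
  rewrite !big_allpairs size_allpairs -/V => h; apply: le_trans h _.
  rewrite natrM -expr2; apply: ler_wpM2l; first exact: exprn_ge0 (ler0n _ _).
  rewrite addn1 -(pairs_energy R G A B (2 * k) true).
  have st2 := @sub_sum_le R _ Z A (fun i => \sum_(j <- A)
     ((repr_diff G B (j - i) ^ (2 * k))%N%:R : R)) sZ.
  apply: le_trans (st2 _); last by move=> x; apply: sumr_ge0 => ? _; exact: ler0n.
  apply: seq_ler_sum => i _.
  apply: le_trans (@sub_sum_le R _ Z A _ sZ _); last by move=> x; exact: ler0n.
  apply: seq_ler_sum => j _ /=.
  by rewrite -natrX -expnM mulnC.
have hb : 0 <= (#|` Z|)%:R ^+ 2 * ((energy G (2 * k + 1) A B)%:R : R).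
  by apply: mulr_ge0; [exact: exprn_ge0 (ler0n _ _) | exact: ler0n].
rewrite -(ler_sqrt _ hb) sqrtr_sqr sqrtrM ?sqrtr_sqr in h2; last exact: exprn_ge0 (ler0n _ _).
by rewrite !ger0_norm ?ler0n // in h2.
Qed.

Lemma Mentry01 (R : realType) (G : zmodType) (k : nat) (A B : {fset G}) x y :
  Mentry G R k A B x y ^+ 2 <= 1.
Proof. by rewrite /Mentry; case: (_ && _); rewrite ?expr1n ?expr0n. Qed.

Lemma Mentry_ge0 (R : realType) (G : zmodType) (k : nat) (A B : {fset G}) x y :
  0 <= Mentry G R k A B x y.
Proof. by rewrite /Mentry; case: (_ && _). Qed.

Lemma lam_ge (R : realType) (G : zmodType) (A B : {fset G}) (k : nat)
  (w : {ffun A -> R}) : w != 0 ->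
  Num.sqrt (\sum_(x <- diffcube G k B A) (Mw G R k A B w x) ^+ 2)
     / Num.sqrt (\sum_(y : A) (w y) ^+ 2) <= lambda1 G R A B k.
Proof.
move=> w0; apply: sup_upper_bound; last by exists w.
split; first by exists (Num.sqrt (\sum_(x <- diffcube G k B A) (Mw G R k A B w x) ^+ 2)
     / Num.sqrt (\sum_(y : A) (w y) ^+ 2)); exists w.
set C := ((#|` diffcube G k B A|)%:R * (size (index_enum A))%:R : R).
exists (Num.sqrt C) => t [v [_ ->]].
set N := \sum_(y : A) (v y) ^+ 2.
have N0 : 0 <= N by apply: sumr_ge0 => y _; exact: sqr_ge0.
have hM : \sum_(x <- diffcube G k B A) (Mw G R k A B v x) ^+ 2 <= C * N.
  apply: le_trans (_ : \sum_(x <- diffcube G k B A) ((size (index_enum A))%:R * N) <= _).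
    apply: ler_sum => x _.
    have := @CS_seq R _ (index_enum A) (fun y => Mentry G R k A B x (val y) * v y).
    rewrite /Mw => h; apply: le_trans h _.
    apply: ler_wpM2l; first exact: ler0n.
    apply: ler_sum => y _; rewrite exprMn.
    have := Mentry01 R G k A B x (val y).
    have := sqr_ge0 (v y); move: (Mentry G R k A B x (val y) ^+ 2) (v y ^+ 2) => a b.
    nra.
  by rewrite sum_const_seq mulrA.
have [->|Np] := eqVneq N 0; first by rewrite sqrtr0 invr0 mulr0 sqrtr_ge0.
have sNp : 0 < Num.sqrt N by rewrite sqrtr_gt0 lt0r Np.
rewrite ler_pdivrMr // -sqrtrM; last by rewrite /C; apply: mulr_ge0; exact: ler0n.
by rewrite ler_sqrt // mulr_ge0 // /C mulr_ge0 // ler0n.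
Qed.

Lemma sum_fsub (R : realType) (T : choiceType) (A : {fset T}) (F : T -> R) :
  \sum_(y : A) F (val y) = \sum_(y <- A) F y.
Proof. by rewrite big_seq_fsetE. Qed.

Lemma Mw_ind (R : realType) (G : zmodType) (A B Z : {fset G}) (k : nat) x :
  Z `<=` A ->
  Mw G R k A B [ffun y : A => ((val y \in Z)%:R : R)] x =
  \sum_(z <- Z) ((x \in [fset (b + diag G k (- z))%R | b in cube G k B])%:R : R).
Proof.
move=> sZ; rewrite /Mw.
rewrite (eq_bigr (fun y : A => Mentry G R k A B x (val y) * (val y \in Z)%:R));
  last by move=> y _; rewrite ffunE.
rewrite (@sum_fsub R _ A (fun y => Mentry G R k A B x y * (y \in Z)%:R)).
rewrite -(big_fset_incl _ sZ); last by move=> y _ /negbTE ->; rewrite mulr0.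
apply: eq_big_seq => y yZ; rewrite yZ mulr1 /Mentry (fsubsetP sZ _ yZ) /=.
rewrite mem_transl diagN opprK mem_cube.
congr (_%:R); congr nat_of_bool; apply/forallP/forallP => h i; move: (h i); by rewrite !mxE addrC.
Qed.

Lemma W1 (R : realType) (G : zmodType) (A B Z : {fset G}) (k : nat) : Z `<=` A ->
  \sum_(z <- Z) \sum_(z' <- Z)
    ((#|` [fset (b + diag G k z)%R | b in cube G k B] `&`
          [fset (b + diag G k z')%R | b in cube G k B]|)%:R : R)
  <= \sum_(x <- diffcube G k B A) (Mw G R k A B [ffun y : A => ((val y \in Z)%:R : R)] x) ^+ 2.
Proof.
move=> sZ.
set T := fun z => [fset (b + diag G k (- z))%R | b in cube G k B].
have TU : forall z, z \in Z -> T z `<=` diffcube G k B A.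
  move=> z hz; apply/fsubsetP => x /imfsetP [b hb ->].
  rewrite diagN; apply: (in_imfset2 _ (fun x a => x - diag G k a)) => //=.
  exact: (fsubsetP sZ).
rewrite (eq_bigr (fun x => (\sum_(z <- Z) ((x \in T z)%:R : R)) ^+ 2)); last first.
  by move=> x _; rewrite Mw_ind.
rewrite -(GLb R _ _ Z _ _ TU).
apply: seq_ler_sum => i _; apply: seq_ler_sum => j _.
by rewrite ler_nat; apply: inter_le2.
Qed.

Lemma wnorm (R : realType) (G : zmodType) (A Z : {fset G}) : Z `<=` A ->
  \sum_(y : A) ([ffun y : A => ((val y \in Z)%:R : R)] y) ^+ 2 = (#|` Z|)%:R.
Proof.
move=> sZ.
rewrite (eq_bigr (fun y : A => ((val y \in Z)%:R : R))); last first.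
  by move=> y _; rewrite ffunE; case: (_ \in _); rewrite ?expr1n ?expr0n.
by rewrite (@sum_fsub R _ A (fun y => ((y \in Z)%:R : R))) (cardR R _ _ _ sZ).
Qed.

Lemma wnz (R : realType) (G : zmodType) (A Z : {fset G}) : Z `<=` A -> Z != fset0 ->
  [ffun y : A => ((val y \in Z)%:R : R)] != 0.
Proof.
move=> sZ /fset0Pn [z hz]; apply/eqP => /ffunP /(_ [` fsubsetP sZ _ hz]).
by rewrite !ffunE /= hz => /eqP; rewrite oner_eq0.
Qed.

Lemma Rk_ge (R : realType) (G : zmodType) (A B : {fset G}) (k : nat) (c : R) :
  A != fset0 ->
  (forall Z, Z `<=` A -> Z != fset0 -> c <= ratioZ G R k B Z) ->
  c <= Rk G R k B A.
Proof.
move=> hA h; rewrite /Rk big_seq_cond; elim/big_ind: _.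
- exact: h (fsubset_refl _) hA.
- by move=> x y hx hy; rewrite le_min hx hy.
by move=> Z /andP [hZ nZ]; apply: h => //; rewrite -fpowersetE.
Qed.

Lemma finish (R : realType) (u z b W X : R) : 0 < z -> 0 <= u -> 0 <= X ->
  (z * b) ^+ 2 <= u * W -> W <= z * X -> b ^+ 2 / X <= u / z.
Proof.
move=> zp u0 X0 h1 h2.
have [->|Xn] := eqVneq X 0; first by rewrite invr0 mulr0 divr_ge0 // ltW.
have Xp : 0 < X by rewrite lt0r Xn.
rewrite ler_pdivrMr // mulrAC ler_pdivlMr //.
have h3 : (z * b) ^+ 2 <= u * (z * X) by apply: le_trans h1 _; exact: ler_wpM2l.
have h4 : z * (b ^+ 2 * z) <= z * (u * X) by move: h3; rewrite exprMn; lra.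
by rewrite ler_pM2l in h4.
Qed.


Theorem theorem42 (G : zmodType) (R : realType) (A B : {fset G}) (k : nat)
  (hA : A != fset0) (hB : B != fset0) (hk : (1 <= k)%N) :
  [/\ Rk G R k B A >= (#|` B| ^ (2 * k))%:R / (lambda1 G R A B k) ^+ 2,
      Rk G R k B A >= (#|` B| ^ (2 * k))%:R / Num.sqrt ((energy G (2 * k + 1) A B)%:R)
    & forall (A1 : {fset G}) (Bf : G -> {fset 'rV[G]_k}) (s : bool),
        A1 `<=` A ->
        (forall y, y \in A1 -> Bf y `<=` cube G k B) ->
        (#|` \bigcup_(y <- A1) [fset (b + diag G k (if s then y else - y))%R | b in Bf y]|)%:R
          >= ((\sum_(y <- A1) #|` Bf y|)%N%:R) ^+ 2 / (energy G k.+1 A B)%:R :> R].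
Proof.
have eB : ((#|` B| ^ (2 * k))%:R : R) = ((#|` B| ^ k)%N%:R) ^+ 2.
  by rewrite -natrX -expnM mulnC.
split; last by move=> A1 Bf s; exact: part3.
- apply: Rk_ge => // Z sZ nZ; rewrite /ratioZ eB.
  have zp : (0 : R) < (#|` Z|)%:R.
    by rewrite ltr0n cardfs_gt0.
  have C := coreZ R G B Z k; rewrite natrM in C.
  have L := lam_ge R G A B k _ (wnz R G A Z sZ nZ); rewrite (wnorm R G A Z sZ) in L.
  set Q := \sum_(x <- diffcube G k B A) _ in L.
  have Q0 : 0 <= Q by apply: sumr_ge0 => x _; exact: sqr_ge0.
  have sz : 0 < Num.sqrt (#|` Z|%:R : R) by rewrite sqrtr_gt0.
  rewrite ler_pdivrMr // in L.
  have l0 : 0 <= lambda1 G R A B k.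
    by have := le_trans (sqrtr_ge0 Q) L; rewrite pmulr_lge0.
  have L2 : Q <= #|` Z|%:R * lambda1 G R A B k ^+ 2.
    rewrite -(sqr_sqrtr Q0) -(sqr_sqrtr (ltW zp)) -exprMn mulrC.
    have := sqrtr_ge0 Q; move: L; move: (Num.sqrt Q) (Num.sqrt (#|` Z|%:R : R)) => a c.
    nra.
  apply: (@finish R _ _ _ _ _ zp (ler0n _ _) (exprn_ge0 2 l0) C).
  exact: le_trans (W1 R G A B Z k sZ) L2.
- apply: Rk_ge => // Z sZ nZ; rewrite /ratioZ eB.
  have zp : (0 : R) < (#|` Z|)%:R.
    by rewrite ltr0n cardfs_gt0.
  have C := coreZ R G B Z k; rewrite natrM in C.
  apply: (@finish R _ _ _ _ _ zp (ler0n _ _) (sqrtr_ge0 _) C).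
  exact: W2.
Qed.
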